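(* Let $\gamma>0$ and $m\ge1$. For each $y\in\{\pm1\}^m$ let $r_y\in\mathbb{R}^m$ satisfy $r_y[i]y[i]\ge\gamma$ for all $i\in[m]$, and let $R=\{r_y\mid y\in\{\pm1\}^m\}$. Then $\{\pm\gamma\}^m\subseteq\mathrm{conv}(R)$.
   Context: $\mathrm{conv}(R)$ denotes the convex hull of $R$. *)

(* Defs.v *)
From HB Require Import structures.
From mathcomp Require Import all_boot all_order all_algebra.
Set Implicit Arguments. Unset Strict Implicit. Unset Printing Implicit Defensive.
Import Order.TTheory GRing.Theory Num.Theory.
Local Open Scope ring_scope.

Definition conv (R : realFieldType) (m : nat) (S : 'rV[R]_m -> Prop)
  (x : 'rV[R]_m) : Prop :=
  exists (n : nat) (p : 'I_n -> 'rV[R]_m) (w : 'I_n -> R),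
    [/\ (forall i, S (p i)), (forall i, 0 <= w i),
        \sum_(i < n) w i = 1 & x = \sum_(i < n) w i *: p i].

Definition sign_vec (R : realFieldType) (m : nat) (y : 'rV[R]_m) : Prop :=
  forall i, y 0 i = 1 \/ y 0 i = -1.

(* Main.v *)
Require Import Defs.
From HB Require Import structures.
From mathcomp Require Import all_boot all_order all_algebra.
From mathcomp Require Import ring lra.
Import Order.TTheory GRing.Theory Num.Theory.
Local Open Scope ring_scope.

Definition vecb (R : realFieldType) {m : nat} (t : {ffun 'I_m -> bool}) : 'rV[R]_m :=
  \row_i (if t i then 1 else -1).

Lemma vecb_sign (R : realFieldType) (m : nat) t : sign_vec (@vecb R m t).
Proof. by move=> i; rewrite mxE; case: (t i); [left|right]. Qed.
Arguments vecb_sign {R m}.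

Definition convT (R : realFieldType) (m : nat) (r : 'rV[R]_m -> 'rV[R]_m)
  (v : 'rV[R]_m) : Prop :=
  exists M : {ffun 'I_m -> bool} -> R,
    [/\ (forall u, 0 <= M u), \sum_u M u = 1 & v = \sum_u M u *: r (vecb R u)].
Arguments convT {R m}.

Lemma convT_comb (R : realFieldType) (m : nat) (r : 'rV[R]_m -> 'rV[R]_m) (l : R) v1 v2 :
  0 <= l <= 1 -> convT r v1 -> convT r v2 -> convT r (l *: v1 + (1 - l) *: v2).
Proof.
move=> /andP[l0 l1] [M1 [M10 M11 ->]] [M2 [M20 M21 ->]].
exists (fun u => l * M1 u + (1 - l) * M2 u); split.
- move=> u; apply: addr_ge0; apply: mulr_ge0 => //; by rewrite subr_ge0.
- by rewrite big_split /= -!mulr_sumr M11 M21 !mulr1 addrC subrK.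
- rewrite !scaler_sumr -big_split /=; apply: eq_bigr => u _.
  by rewrite !scalerA -scalerDl.
Qed.

Definition setb (m : nat) (t : {ffun 'I_m -> bool}) (k : 'I_m) (b : bool) :=
  [ffun j => if j == k then b else t j].
Arguments setb {m}.

Lemma main_ind (R : realFieldType) (m : nat) (gamma : R)
  (r : 'rV[R]_m -> 'rV[R]_m) (hgamma : 0 < gamma) (x : 'rV[R]_m)
  (hx : forall i, - gamma <= x 0 i <= gamma) :
  forall k, (k <= m)%N -> forall q : {ffun 'I_m -> bool} -> 'rV[R]_m,
    (forall t, convT r (q t)) ->
    (forall t (i : 'I_m), (i < k)%N -> gamma <= q t 0 i * vecb R t 0 i) ->
    (forall t (i : 'I_m), (k <= i)%N -> q t 0 i = x 0 i) ->
    convT r x.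
Proof.
elim=> [|k IH] km q qc qlo qeq.
  have -> : x = q [ffun _ => true] by apply/rowP => i; rewrite qeq.
  exact: qc.
have km' : (k < m)%N by [].
pose ko := Ordinal km'.
pose a t := q (setb t ko true) 0 ko.
pose b t := q (setb t ko false) 0 ko.
have ha t : gamma <= a t.
  have := qlo (setb t ko true) ko (ltnSn k).
  by rewrite /vecb mxE ffunE eqxx mulr1.
have hb t : b t <= - gamma.
  have := qlo (setb t ko false) ko (ltnSn k).
  by rewrite /vecb mxE ffunE eqxx mulrN1 lerNr.
pose l t := (x 0 ko - b t) / (a t - b t).
have dpos t : 0 < a t - b t.
  have := ha t; have := hb t; lra.
have hl t : 0 <= l t <= 1.
  have := hx ko; move=> /andP[h1 h2].
  have h0 := dpos t.
  apply/andP; split.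
    apply: divr_ge0; last exact: ltW.
    have := hb t; lra.
  rewrite ler_pdivrMr // mul1r.
  have := ha t; lra.
have hlk t : l t * a t + (1 - l t) * b t = x 0 ko.
  rewrite /l; have h0 := dpos t.
  field; lra.
apply: (IH (ltnW km) (fun t => l t *: q (setb t ko true) + (1 - l t) *: q (setb t ko false))).
- move=> t; exact: convT_comb.
- move=> t i ik.
  have ne : (i == ko) = false.
    by apply/negbTE; apply/eqP => e; move: ik; rewrite e /= ltnn.
  have ik' : (i < k.+1)%N by apply: ltnW.
  have h1 := qlo (setb t ko true) i ik'.
  have h2 := qlo (setb t ko false) i ik'.
  move: h1 h2; rewrite /vecb !mxE !ffunE ne => h1 h2.
  have := hl t => /andP[l0 l1].
  set s := (if t i then 1 else -1) in h1 h2 *.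
  set u := q _ 0 i in h1 *. set w := q _ 0 i in h2 *.
  have e : (l t * u + (1 - l t) * w) * s = l t * (u * s) + (1 - l t) * (w * s) by ring.
  rewrite e.
  have : l t * gamma <= l t * (u * s) by apply: ler_wpM2l.
  have : (1 - l t) * gamma <= (1 - l t) * (w * s) by apply: ler_wpM2l; lra.
  lra.
- move=> t i ki.
  rewrite !mxE.
  case: (ltnP k i) => [ki'|ik].
    by rewrite !qeq //; ring.
  have -> : i = ko by apply: val_inj => /=; apply/eqP; rewrite eqn_leq ik ki.
  exact: hlk.
Qed.

Theorem mainTheorem8 (R : realFieldType) (m : nat) (gamma : R)
  (r : 'rV[R]_m -> 'rV[R]_m)
  (hgamma : 0 < gamma) (hm : (1 <= m)%N)
  (hr : forall y, sign_vec y -> forall i, gamma <= r y 0 i * y 0 i) :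
  forall x : 'rV[R]_m,
    (forall i, x 0 i = gamma \/ x 0 i = - gamma) ->
    conv (fun z => exists2 y, sign_vec y & z = r y) x.
Proof.
move=> x hx.
have hx' : forall i, - gamma <= x 0 i <= gamma.
  move=> i; case: (hx i) => ->; apply/andP; split; lra.
have [M [M0 M1 Mx]] : convT r x.
  apply: (@main_ind R m gamma r hgamma x hx' m (leqnn m) (fun t => r (vecb R t))).
  - move=> t; exists (fun u => if u == t then 1 else 0); split.
    + by move=> u; case: eqP.
    + by rewrite (bigD1 t) //= eqxx big1 ?addr0 // => u /negbTE ->.
    + rewrite (bigD1 t) //= eqxx scale1r big1 ?addr0 // => u /negbTE ->.
      by rewrite scale0r.
  - by move=> t i _; apply: hr; apply: vecb_sign.
  - by move=> t i hi; move: (ltn_ord i); rewrite ltnNge hi.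
exists #|{ffun 'I_m -> bool}|, (fun i => r (vecb R (enum_val i))),
  (fun i => M (enum_val i)); split.
- move=> i; exists (vecb R (enum_val i)) => //; exact: vecb_sign.
- by move=> i.
- by rewrite -(big_enum_val (A := {ffun 'I_m -> bool})).
- by rewrite Mx (big_enum_val (A := {ffun 'I_m -> bool})).
Qed.
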